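(* Let $C'$, $S$, $\widehat C$ be as in the context. Then \[ \ell(\widehat C)=\ell(C')+\hat N-\check N . \]
   Context: A column is a finite sequence of entries listed top to bottom; for a sequence $C$, $\ell(C)$ is the number of pairs $i<j$ with $C(i)>C(j)$. $C'=(C'(1),\ldots,C'(c'))$ is a sequence of distinct positive integers and $S$ is a set of $c$ positive integers, $c\in\{c',c'+1\}$, such that with $s_1<\cdots<s_c$ the elements of $S$ and $t_1<\cdots<t_{c'}$ the entries of $C'$ sorted, $s_r\le t_r$ for $r\le c'$. The column $\widehat C$ of length $c$ is built as follows: every $x\in S\cap C'$ is placed in the row where $x$ occurs in $C'$; if $c=c'+1$, the largest element of $S\setminus C'$ is placed in row $c$; the remaining elements of $S\setminus C'$, in decreasing order, are placed in the rows occupied in $C'$ by the elements of $C'\setminus S$, in decreasing order (the $k$-th largest next to the $k$-th largest). Pivots: row $r$ is a pivot row if either $r\le c'$ and $\widehat C(r)<C'(r)$, or $r=c'+1\le c$. With pivot rows $q_1,\ldots,q_p$, put $b_j=\widehat C(q_j)$, $d_j=C'(q_j)$ if $q_j\le c'$ and $d_j=\infty$ otherwise. Define $\check N=\sum_{j=1}^p\#\{r>q_j,\ r\le c':\ C'(r)\in S,\ b_j<C'(r)<d_j\}$ and $\hat N=\sum_{j=1}^p\#\{r<q_j:\ C'(r)\in S,\ b_j<C'(r)<d_j\}$. *)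

(* Defs.v *)
From mathcomp Require Import all_boot all_order all_algebra.
Set Implicit Arguments. Unset Strict Implicit. Unset Printing Implicit Defensive.

(* Conventions: columns are sequences (seq nat), rows are 0-indexed
   (row r of the paper is index r-1 here).  The set S is a duplicate-free
   sequence (its order is irrelevant). *)

Definition ell (C : seq nat) : nat :=
  #|[set ij : 'I_(size C) * 'I_(size C) |
      (ij.1 < ij.2)%N && (nth 0 C ij.2 < nth 0 C ij.1)%N]|.

Definition Chat (C' S : seq nat) : seq nat :=
  let c' := size C' in
  let c := size S in
  let D := sort geq [seq x <- C' | x \notin S] in
  let SD := sort geq [seq x <- S | x \notin C'] in
  let E := if c == c'.+1 then behead SD else SD in
  mkseq (fun r =>
    if (r < c')%N then
      let x := nth 0 C' r in
      if x \in S then x else nth 0 E (index x D)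
    else head 0 SD) c.

Definition is_pivot (C' S : seq nat) (q : nat) : bool :=
  ((q < size C') && (nth 0 (Chat C' S) q < nth 0 C' q))
  || ((q == size C') && (q < size S)).

(* x < d_q, with d_q = C'(q) if q is a row of C', and d_q = infinity otherwise *)
Definition lt_d (C' : seq nat) (q x : nat) : bool :=
  if (q < size C')%N then (x < nth 0 C' q)%N else true.

(* the entries of C' in row r lying in S and strictly between b_q and d_q *)
Definition between (C' S : seq nat) (q r : nat) : bool :=
  (nth 0 C' r \in S) && (nth 0 (Chat C' S) q < nth 0 C' r)%N
  && lt_d C' q (nth 0 C' r).

Definition Ncheck (C' S : seq nat) : nat :=
  \sum_(q < size S | is_pivot C' S q)
     #|[set r : 'I_(size C') | (q < r)%N && between C' S q r]|.

Definition Nhat (C' S : seq nat) : nat :=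
  \sum_(q < size S | is_pivot C' S q)
     #|[set r : 'I_(size C') | (r < q)%N && between C' S q r]|.

(* Main.v *)
Require Import Defs.
From mathcomp Require Import all_boot all_order all_algebra.
Import GRing.Theory Num.Theory.
From mathcomp Require Import zify.

Lemma nth_count (leT : rel nat) (p : pred nat) u i :
  transitive leT ->
  (forall x y, leT x y -> p y -> p x) -> sorted leT u -> i < size u ->
  p (nth 0 u i) = (i < count p u).
Proof.
move=> tr dc; elim: u i => [|x u IH] i //= so.
have allx := order_path_min tr so.
have so' := path_sorted so.
have c0 : ~~ p x -> count p u = 0.
  move=> npx; apply/eqP; rewrite -leqn0 leqNgt -has_count; apply/hasP => -[y yu py].
  by move/allP: allx => /(_ y yu) lxy; rewrite (dc _ _ lxy py) in npx.
case: i => [|i] /= ilt.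
  by case px: (p x) => //=; rewrite c0 ?px.
rewrite IH //; case px: (p x) => /=; first by [].
by rewrite c0 ?px.
Qed.

Lemma count_split (a b : pred nat) s :
  count a s = count (predI a b) s + count (predI a (predC b)) s.
Proof. by elim: s => //= x s ->; case: (a x); case: (b x) => /=; lia. Qed.

Lemma count_swap (a : pred nat) (s1 s2 : seq nat) : uniq s1 -> uniq s2 ->
  count (predI a (fun x => x \in s2)) s1 = count (predI a (fun x => x \in s1)) s2.
Proof.
move=> u1 u2; rewrite -!size_filter; apply: perm_size; apply: uniq_perm;
  rewrite ?filter_uniq // => x; rewrite !mem_filter /=.
by case: (a x); case: (x \in s1); case: (x \in s2).
Qed.

Lemma sdec_nth (s : seq nat) i j : sorted geq s -> uniq s ->
  i < size s -> j < size s -> (nth 0 s i < nth 0 s j) = (j < i).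
Proof.
move=> so us ii jj.
have tr : transitive geq by move=> a b c /= h1 h2; apply: leq_trans h2 h1.
case: (ltngtP i j) => h.
- have := sorted_ltn_nth tr 0 so i j ii jj h; rewrite /= => le.
  by apply/negbTE; rewrite -leqNgt.
- have := sorted_ltn_nth tr 0 so j i jj ii h; rewrite /= => le.
  rewrite ltn_neqAle le andbT.
  by rewrite (nth_uniq 0 ii jj us) neq_ltn h orbT.
- by rewrite h ltnn.
Qed.

Definition Dl (C' S : seq nat) := sort geq [seq x <- C' | x \notin S].
Definition SDl (C' S : seq nat) := sort geq [seq x <- S | x \notin C'].
Definition El (C' S : seq nat) :=
  if size S == (size C').+1 then behead (SDl C' S) else SDl C' S.
Definition gf (C' S : seq nat) x :=
  if x \in S then x else nth 0 (El C' S) (index x (Dl C' S)).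

Lemma count_dom (C' S : seq nat) : size C' <= size S ->
  (forall r, (r < size C')%N ->
     (nth 0 (sort leq S) r <= nth 0 (sort leq C') r)%N) ->
  forall t, count (fun x => x <= t) C' <= count (fun x => x <= t) S.
Proof.
move=> sz dom t.
rewrite -(count_sort leq _ C') -(count_sort leq _ S).
have dc : forall x y, leq x y -> (y <= t) -> (x <= t) by move=> x y h1 h2; apply: leq_trans h1 h2.
case e: (count _ (sort leq C')) => [|k] //.
have kc : k < size C'.
  by rewrite -(size_sort leq); apply: leq_trans (count_size (fun x => x <= t) _); rewrite e.
have h1 : nth 0 (sort leq C') k <= t.
  by rewrite (@nth_count leq (fun x => x <= t) _ k leq_trans dc (sort_sorted leq_total _)) ?size_sort // e.
have h2 : nth 0 (sort leq S) k <= t by apply: leq_trans (dom _ kc) h1.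
rewrite (@nth_count leq (fun x => x <= t) _ k leq_trans dc (sort_sorted leq_total _)) ?size_sort in h2 => //.
by apply: leq_trans kc sz.
Qed.

Lemma sizes_DSD (C' S : seq nat) : uniq C' -> uniq S ->
  size (SDl C' S) + size C' = size (Dl C' S) + size S.
Proof.
move=> uC uS; rewrite /SDl /Dl !size_sort !size_filter.
rewrite -(count_predT C') -(count_predT S).
rewrite (count_split predT (fun x => x \in S) C') (count_split predT (fun x => x \in C') S).
rewrite (count_swap predT _ _ uC uS).
rewrite (@eq_count _ (fun x => x \notin C') (predI predT (predC (fun x => x \in C')))) //.
rewrite (@eq_count _ (fun x => x \notin S) (predI predT (predC (fun x => x \in S)))) //.
lia.
Qed.

Lemma countD_SD (C' S : seq nat) : uniq C' -> uniq S -> size C' <= size S ->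
  (forall r, (r < size C')%N ->
     (nth 0 (sort leq S) r <= nth 0 (sort leq C') r)%N) ->
  forall t, count (fun x => x <= t) (Dl C' S) <= count (fun x => x <= t) (SDl C' S).
Proof.
move=> uC uS sz dom t; rewrite /SDl /Dl !count_sort !count_filter.
have := @count_dom C' S sz dom t.
rewrite (count_split (fun x => x <= t) (fun x => x \in S) C').
rewrite (count_split (fun x => x <= t) (fun x => x \in C') S).
rewrite (count_swap _ _ _ uC uS).
by rewrite leq_add2l.
Qed.

Lemma geq_total : total geq.
Proof. by move=> x y; rewrite /= orbC leq_total. Qed.
Lemma geq_trans : transitive geq.
Proof. by move=> a b c /= h1 h2; apply: leq_trans h2 h1. Qed.

Lemma D_sorted C' S : sorted geq (Dl C' S).
Proof. exact: sort_sorted geq_total _. Qed.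
Lemma SD_sorted C' S : sorted geq (SDl C' S).
Proof. exact: sort_sorted geq_total _. Qed.
Lemma D_uniq C' S : uniq C' -> uniq (Dl C' S).
Proof. by move=> u; rewrite sort_uniq filter_uniq. Qed.
Lemma SD_uniq C' S : uniq S -> uniq (SDl C' S).
Proof. by move=> u; rewrite sort_uniq filter_uniq. Qed.
Lemma mem_D C' S x : (x \in Dl C' S) = (x \in C') && (x \notin S).
Proof. by rewrite mem_sort mem_filter andbC. Qed.
Lemma mem_SD C' S x : (x \in SDl C' S) = (x \in S) && (x \notin C').
Proof. by rewrite mem_sort mem_filter andbC. Qed.

Lemma E_sub C' S x : x \in El C' S -> x \in SDl C' S.
Proof. by rewrite /El; case: ifP => // _; case: (SDl C' S) => //= y s xs; rewrite inE xs orbT. Qed.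

Lemma E_sorted C' S : sorted geq (El C' S).
Proof.
rewrite /El; have := SD_sorted C' S; case: ifP => // _.
by case: (SDl C' S) => //= y s /path_sorted.
Qed.
Lemma E_uniq C' S : uniq S -> uniq (El C' S).
Proof.
move=> u; rewrite /El; have := @SD_uniq C' S u; case: ifP => // _.
by case: (SDl C' S) => //= y s /andP[].
Qed.

Lemma size_E C' S : uniq C' -> uniq S ->
  (size S = size C' \/ size S = (size C').+1) -> size (El C' S) = size (Dl C' S).
Proof.
move=> uC uS hs; have k := @sizes_DSD C' S uC uS; rewrite /El.
case: hs => e; rewrite e in k *.
  have -> : (size C' == (size C').+1) = false by apply/negbTE; lia.
  move: k. set a := size (SDl _ _). set b := size (Dl _ _). set c := size C'. lia.
rewrite eqxx size_behead. move: k. set a := size (SDl _ _). set b := size (Dl _ _). set c := size C'. lia.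
Qed.

Lemma count_pC (t : nat) s :
  count (fun x => ~~ (x <= t)) s + count (fun x => x <= t) s = size s.
Proof. by rewrite addnC -(count_predC (fun x => x <= t)); congr (_ + _); apply: eq_count. Qed.

Lemma dominance C' S : uniq C' -> uniq S ->
  (size S = size C' \/ size S = (size C').+1) ->
  (forall r, (r < size C')%N ->
     (nth 0 (sort leq S) r <= nth 0 (sort leq C') r)%N) ->
  forall i, i < size (Dl C' S) -> nth 0 (El C' S) i < nth 0 (Dl C' S) i.
Proof.
move=> uC uS hs dom i iD.
have sE := @size_E C' S uC uS hs.
have sz : size C' <= size S by case: hs => ->.
set t := nth 0 (Dl C' S) i.
have tC : t \in C' by have := mem_nth 0 iD; rewrite mem_D => /andP[].
have iE : i < size (El C' S) by rewrite sE.
have EC : nth 0 (El C' S) i \notin C'.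
  by have := @E_sub C' S _ (mem_nth 0 iE); rewrite mem_SD => /andP[].
have ne : nth 0 (El C' S) i != t by apply: contraNneq EC => ->.
rewrite ltn_neqAle ne /=; apply: contraT; rewrite -ltnNge => lt.
pose p := fun x => ~~ (x <= t).
have dc : forall x y, geq x y -> p y -> p x.
  by move=> x y /= h; rewrite /p -!ltnNge => h2; apply: leq_trans h2 h.
have hD := @nth_count geq p _ i geq_trans dc (D_sorted C' S) iD.
have hE := @nth_count geq p _ i geq_trans dc (E_sorted C' S) iE.
rewrite /p -/t leqnn /= in hD; rewrite /p -ltnNge lt in hE.
move: hD => /esym /negbT; rewrite -leqNgt => hD.
have cD := @countD_SD C' S uC uS sz dom t.
have k1 := count_pC t (Dl C' S).
have k2 := count_pC t (SDl C' S).
have k3 := count_pC t (El C' S).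
have k4 := @sizes_DSD C' S uC uS.
move: hE => /esym hE.
have hlt : count p (Dl C' S) < count p (El C' S) := leq_ltn_trans hD hE.
suff hh : count p (El C' S) <= count p (Dl C' S) by rewrite leqNgt hlt in hh.
move: k3 hE sE; rewrite /El; case: ifP => hc.
- move/eqP: hc => hc; rewrite hc in k4.
  have hSD := @nth_count geq p _ 0 geq_trans dc (SD_sorted C' S).
  move: hSD k2 cD; case: (SDl C' S) => [|h E'] //= hSD.
  rewrite /p in hSD *.
  case ph: (h <= t) => /=.
  + have c0 : count p E' = 0 by move: hSD; rewrite ph /= => /(_ isT); case: (count _ E') => //.
    by rewrite /p in c0; rewrite c0.
  + rewrite /p; lia.
- move/negbT: hc => hc; have hc' : size S = size C' by case: hs => //; move=> e; rewrite e eqxx in hc.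
  rewrite /p; lia.
Qed.

Lemma Chat_lt C' S r : r < size C' -> r < size S ->
  nth 0 (Chat C' S) r = gf C' S (nth 0 C' r).
Proof. by move=> h1 h2; rewrite /Chat nth_mkseq //= h1. Qed.

Lemma Chat_n C' S : size C' < size S ->
  nth 0 (Chat C' S) (size C') = head 0 (SDl C' S).
Proof. by move=> h; rewrite /Chat nth_mkseq //= ltnn. Qed.

Lemma size_Chat C' S : size (Chat C' S) = size S.
Proof. by rewrite /Chat size_mkseq. Qed.

Lemma g_in C' S x : x \in S -> gf C' S x = x.
Proof. by rewrite /gf => ->. Qed.

Lemma g_out C' S x : uniq C' -> uniq S ->
  (size S = size C' \/ size S = (size C').+1) ->
  (forall r, (r < size C')%N ->
     (nth 0 (sort leq S) r <= nth 0 (sort leq C') r)%N) ->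
  x \in C' -> x \notin S ->
  [/\ gf C' S x = nth 0 (El C' S) (index x (Dl C' S)),
      index x (Dl C' S) < size (Dl C' S),
      gf C' S x < x, gf C' S x \in S & gf C' S x \notin C'].
Proof.
move=> uC uS hs dom xC xS.
have xD : x \in Dl C' S by rewrite mem_D xC xS.
have iD : index x (Dl C' S) < size (Dl C' S) by rewrite index_mem.
have ge : gf C' S x = nth 0 (El C' S) (index x (Dl C' S)) by rewrite /gf (negbTE xS).
have iE : index x (Dl C' S) < size (El C' S) by rewrite (@size_E C' S uC uS hs).
have hm := @E_sub C' S _ (mem_nth 0 iE); rewrite mem_SD in hm; case/andP: hm => h1 h2.
split => //; rewrite ?ge //.
by have := @dominance C' S uC uS hs dom _ iD; rewrite nth_index.
Qed.

Lemma g_mono C' S x y : uniq C' -> uniq S ->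
  (size S = size C' \/ size S = (size C').+1) ->
  (forall r, (r < size C')%N ->
     (nth 0 (sort leq S) r <= nth 0 (sort leq C') r)%N) ->
  x \in C' -> x \notin S -> y \in C' -> y \notin S ->
  (gf C' S x < gf C' S y) = (x < y).
Proof.
move=> uC uS hs dom xC xS yC yS.
have [gx ix _ _ _] := @g_out C' S x uC uS hs dom xC xS.
have [gy iy _ _ _] := @g_out C' S y uC uS hs dom yC yS.
have sE := @size_E C' S uC uS hs.
rewrite gx gy sdec_nth ?E_sorted ?E_uniq ?sE //.
rewrite -{2}(nth_index 0 (_ : x \in Dl C' S)) ?mem_D ?xC ?xS //.
rewrite -{2}(nth_index 0 (_ : y \in Dl C' S)) ?mem_D ?yC ?yS //.
by rewrite sdec_nth ?D_sorted ?D_uniq.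
Qed.

Lemma g_lt_head C' S x : uniq C' -> uniq S ->
  size S = (size C').+1 ->
  (forall r, (r < size C')%N ->
     (nth 0 (sort leq S) r <= nth 0 (sort leq C') r)%N) ->
  x \in C' -> x \notin S -> gf C' S x < head 0 (SDl C' S).
Proof.
move=> uC uS hs dom xC xS.
have hs' : size S = size C' \/ size S = (size C').+1 by right.
have [gx ix _ _ _] := @g_out C' S x uC uS hs' dom xC xS.
have k := @sizes_DSD C' S uC uS.
rewrite gx /El hs eqxx nth_behead.
have -> : head 0 (SDl C' S) = nth 0 (SDl C' S) 0 by case: (SDl C' S).
rewrite sdec_nth ?SD_sorted ?SD_uniq //.
move: k ix; rewrite hs; set a := size (SDl _ _); set b := size (Dl _ _); set c := size C'; lia.
move: k ix; rewrite hs; set a := size (SDl _ _); set b := size (Dl _ _); set c := size C'; lia.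
Qed.

Ltac bsplit := repeat match goal with |- context[?a < ?b] => case: (ltnP a b) => ? end.

Lemma piv_lt C' S q : q < size C' ->
  is_pivot C' S q = (nth 0 (Chat C' S) q < nth 0 C' q).
Proof.
move=> h; rewrite /is_pivot h /=.
have -> : (q == size C') = false by apply/negbTE; lia.
by rewrite /= orbF.
Qed.

Lemma btw_lt C' S q r : q < size C' ->
  between C' S q r = [&& nth 0 C' r \in S, nth 0 (Chat C' S) q < nth 0 C' r & nth 0 C' r < nth 0 C' q].
Proof. by move=> h; rewrite /between /lt_d h andbA. Qed.

Lemma pairwise C' S i j : uniq C' -> uniq S ->
  (size S = size C' \/ size S = (size C').+1) ->
  (forall r, (r < size C')%N ->
     (nth 0 (sort leq S) r <= nth 0 (sort leq C') r)%N) ->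
  i < size C' -> j < size C' ->
  ((i < j) && (nth 0 (Chat C' S) j < nth 0 (Chat C' S) i)) +
  (is_pivot C' S i && ((i < j) && between C' S i j)) =
  ((i < j) && (nth 0 C' j < nth 0 C' i)) +
  (is_pivot C' S j && ((i < j) && between C' S j i)).
Proof.
move=> uC uS hs dom iC jC.
have sz : size C' <= size S by case: hs => ->.
rewrite !piv_lt //. rewrite !btw_lt //. rewrite !Chat_lt //; try (by apply: leq_trans sz).
case: (ltnP i j) => ij; last by rewrite !andbF.
rewrite ?andbT.
have ne : nth 0 C' i != nth 0 C' j by rewrite nth_uniq // neq_ltn ij.
have aC : nth 0 C' i \in C' by apply: mem_nth.
have bC : nth 0 C' j \in C' by apply: mem_nth.
move: ne aC bC; set a := nth 0 C' i; set b := nth 0 C' j => ne aC bC.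
case aS: (a \in S); case bS: (b \in S).
- by rewrite !g_in // !ltnn /= ?andbF.
- have [_ _ lb _ gbC] := @g_out C' S b uC uS hs dom bC (negbT bS).
  rewrite (@g_in C' S _ aS) ltnn /= ?andbF ?addn0.
  move: lb ne; set gb := gf C' S b; bsplit; lia.
- have [_ _ la _ gaC] := @g_out C' S a uC uS hs dom aC (negbT aS).
  rewrite (@g_in C' S _ bS) ltnn /= ?andbF ?addn0.
  have nab : gf C' S a != b by apply: contraNneq gaC => ->.
  move: la ne nab; set ga := gf C' S a; bsplit; lia.
- rewrite /= ?andbF ?addn0.
  by rewrite (@g_mono C' S b a uC uS hs dom bC (negbT bS) aC (negbT aS)).
Qed.
Lemma card_pairs k (P : nat -> nat -> bool) :
  #|[set ij : 'I_k * 'I_k | P ij.1 ij.2]| = \sum_(0 <= i < k) \sum_(0 <= j < k) P i j.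
Proof.
rewrite big_mkord; under eq_bigr do rewrite big_mkord.
rewrite pair_big /= -sum1_card big_mkcond /=; apply: eq_bigr => p _.
by rewrite in_set; case: (P _ _).
Qed.
Lemma card_one k (P : nat -> bool) :
  #|[set r : 'I_k | P r]| = \sum_(0 <= r < k) P r.
Proof.
rewrite big_mkord -sum1_card big_mkcond /=; apply: eq_bigr => p _.
by rewrite in_set; case: (P _).
Qed.

Lemma ellE X : ell X =
  \sum_(0 <= i < size X) \sum_(0 <= j < size X) ((i < j) && (nth 0 X j < nth 0 X i)).
Proof. by rewrite /ell (card_pairs (size X) (fun i j => (i < j) && (nth 0 X j < nth 0 X i))). Qed.

Lemma NcheckE C' S : Ncheck C' S = \sum_(0 <= q < size S) \sum_(0 <= r < size C')
   (is_pivot C' S q && ((q < r) && between C' S q r)).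
Proof.
rewrite /Ncheck big_mkord big_mkcond /=; apply: eq_bigr => q _.
rewrite (card_one (size C') (fun r => (q < r) && between C' S q r)).
by case: (is_pivot C' S q) => //; rewrite big1.
Qed.

Lemma NhatE C' S : Nhat C' S = \sum_(0 <= q < size S) \sum_(0 <= r < size C')
   (is_pivot C' S q && ((r < q) && between C' S q r)).
Proof.
rewrite /Nhat big_mkord big_mkcond /=; apply: eq_bigr => q _.
rewrite (card_one (size C') (fun r => (r < q) && between C' S q r)).
by case: (is_pivot C' S q) => //; rewrite big1.
Qed.

Lemma sum_sq_recr n (F : nat -> nat -> nat) :
  \sum_(0 <= i < n.+1) \sum_(0 <= j < n.+1) F i j =
  \sum_(0 <= i < n) \sum_(0 <= j < n) F i j + \sum_(0 <= i < n) F i n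
  + \sum_(0 <= j < n.+1) F n j.
Proof.
rewrite big_nat_recr //=; congr (_ + _); rewrite -big_split; apply: eq_bigr => i _.
by rewrite big_nat_recr.
Qed.

Lemma core C' S : uniq C' -> uniq S ->
  (size S = size C' \/ size S = (size C').+1) ->
  (forall r, (r < size C')%N ->
     (nth 0 (sort leq S) r <= nth 0 (sort leq C') r)%N) ->
  \sum_(0 <= i < size C') \sum_(0 <= j < size C')
     ((i < j) && (nth 0 (Chat C' S) j < nth 0 (Chat C' S) i)) +
  \sum_(0 <= q < size C') \sum_(0 <= r < size C')
     (is_pivot C' S q && ((q < r) && between C' S q r)) =
  \sum_(0 <= i < size C') \sum_(0 <= j < size C') ((i < j) && (nth 0 C' j < nth 0 C' i)) +
  \sum_(0 <= q < size C') \sum_(0 <= r < size C')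
     (is_pivot C' S q && ((r < q) && between C' S q r)).
Proof.
move=> uC uS hs dom.
rewrite (exchange_big_nat _ 0 (size C') 0 (size C') predT predT
  (fun q r => (is_pivot C' S q && ((r < q) && between C' S q r)) : nat)) /=.
rewrite -!big_split /=; apply: eq_big_nat => i /andP[_ iC].
rewrite -!big_split /=; apply: eq_big_nat => j /andP[_ jC].
exact: pairwise.
Qed.

Lemma rown C' S r : uniq C' -> uniq S -> size S = (size C').+1 ->
  (forall r, (r < size C')%N ->
     (nth 0 (sort leq S) r <= nth 0 (sort leq C') r)%N) ->
  r < size C' ->
  (nth 0 (Chat C' S) (size C') < nth 0 (Chat C' S) r) =
  is_pivot C' S (size C') && ((r < size C') && between C' S (size C') r).
Proof.
move=> uC uS hs dom rC.
rewrite /is_pivot /between /lt_d ltnn eqxx hs ltnSn rC /= andbT.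
rewrite Chat_n ?hs // Chat_lt ?hs; last by apply: ltnW.
have xC : nth 0 C' r \in C' by apply: mem_nth.
case xS: (nth 0 C' r \in S) => /=; first by rewrite (@g_in C' S _ xS).
apply/negbTE; rewrite -leqNgt ltnW //.
exact: (@g_lt_head C' S _ uC uS hs dom xC (negbT xS)).
exact: rC.
Qed.

Local Open Scope ring_scope.

Theorem lemma4p8 (C' S : seq nat) :
  uniq C' -> all (fun x => 0 < x)%N C' ->
  uniq S -> all (fun x => 0 < x)%N S ->
  (size S = size C' \/ size S = (size C').+1) ->
  (forall r, (r < size C')%N ->
     (nth 0 (sort leq S) r <= nth 0 (sort leq C') r)%N) ->
  ((ell (Chat C' S))%:Z = (ell C')%:Z + (Nhat C' S)%:Z - (Ncheck C' S)%:Z)%R.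
Proof.
move=> uC _ uS _ hs dom.
suff H : (ell (Chat C' S) + Ncheck C' S = ell C' + Nhat C' S)%N by lia.
have K := @core C' S uC uS hs dom.
rewrite !ellE NcheckE NhatE size_Chat.
case: (hs) => e; rewrite e; first exact: K.
rewrite !sum_sq_recr.
have r1 : (\sum_(0 <= q < (size C').+1) \sum_(0 <= r < size C')
     (is_pivot C' S q && ((q < r) && between C' S q r)) =
   \sum_(0 <= q < size C') \sum_(0 <= r < size C')
     (is_pivot C' S q && ((q < r) && between C' S q r)) +
   \sum_(0 <= r < size C')
     (is_pivot C' S (size C') && ((size C' < r) && between C' S (size C') r)))%N.
  by rewrite big_nat_recr.
have r2 : (\sum_(0 <= q < (size C').+1) \sum_(0 <= r < size C')
     (is_pivot C' S q && ((r < q) && between C' S q r)) =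
   \sum_(0 <= q < size C') \sum_(0 <= r < size C')
     (is_pivot C' S q && ((r < q) && between C' S q r)) +
   \sum_(0 <= r < size C')
     (is_pivot C' S (size C') && ((r < size C') && between C' S (size C') r)))%N.
  by rewrite big_nat_recr.
rewrite r1 r2.
have z1 : (\sum_(0 <= j < (size C').+1)
    ((size C' < j) && (nth 0 (Chat C' S) j < nth 0 (Chat C' S) (size C'))) = 0)%N.
  rewrite big_nat_cond big1 // => j /andP[/andP[_ jl] _].
  by rewrite ltnNge -ltnS jl.
have z2 : (\sum_(0 <= r < size C')
    (is_pivot C' S (size C') && ((size C' < r) && between C' S (size C') r)) = 0)%N.
  rewrite big_nat_cond big1 // => j /andP[/andP[_ jl] _].
  by rewrite ltnNge ltnW // andbF.
have z3 : (\sum_(0 <= i < size C')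
    ((i < size C') && (nth 0 (Chat C' S) (size C') < nth 0 (Chat C' S) i)) =
    \sum_(0 <= r < size C')
    (is_pivot C' S (size C') && ((r < size C') && between C' S (size C') r)))%N.
  apply: eq_big_nat => i /andP[_ iC].
  by rewrite (@rown C' S i uC uS e dom iC) iC.
rewrite z1 z2 z3 !addn0.
move: K; set A := \sum_(0 <= i < size C') _; set B := \sum_(0 <= i < size C') _.
set Cc := \sum_(0 <= i < size C') _; set Dd := \sum_(0 <= i < size C') _.
set Ee := \sum_(0 <= i < size C') _.
move=> h; rewrite -addnA (addnC Ee) addnA h addnA.
by [].
Qed.
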